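(* For every $n$ with $2\le n\le\infty$, the two identities $$ysxt\,xy\,hxky \approx ysxt\,yx\,hxky \quad\text{and}\quad xsyt\,xy\,hxky \approx xsyt\,yx\,hxky$$ constitute a finite identity basis for the Baxter monoid $\mathrm{baxt}_n$. Consequently, all Baxter monoids of rank at least $2$ (including rank $\infty$) are equationally equivalent.
   Context: Let $\mathcal{A}=\{1<2<3<\cdots\}$, $\mathcal{A}_n=\{1<\cdots<n\}$, $\mathcal{A}_\infty=\mathcal{A}$. Right strict binary search tree: labelled rooted binary tree in which each node's label is $\ge$ every label in its left subtree and $<$ every label in its right subtree; inserting $a$: if empty create node $a$, else with root label $x$ insert into right subtree if $a>x$, left subtree otherwise. $\mathrm{P}_{\mathrm{sylv}}(w_1\cdots w_k)$ is obtained from the empty tree by inserting $w_k,\dots,w_1$ in this order. Left strict binary search tree: each node's label is $>$ every label in its left subtree and $\le$ every label in its right subtree; inserting $a$: if empty create node $a$, else with root label $x$ insert into left subtree if $a<x$, right subtree otherwise. $\mathrm{P}^\sharp(w_1\cdots w_k)$ is obtained from the empty tree by inserting $w_1,\dots,w_k$ in this order. Set $\mathrm{P}_{\mathrm{baxt}}(w)=(\mathrm{P}^\sharp(w),\mathrm{P}_{\mathrm{sylv}}(w))$; $u\equiv v\iff\mathrm{P}_{\mathrm{baxt}}(u)=\mathrm{P}_{\mathrm{baxt}}(v)$ is a congruence, and $\mathrm{baxt}_n=\mathcal{A}_n^*/{\equiv}$. Identities: $\mathcal{X}$ is a countably infinite alphabet; an identity is $\mathbf{u}\approx\mathbf{v}$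 with $\mathbf{u},\mathbf{v}\in\mathcal{X}^*$; a monoid $S$ satisfies it if $\varphi(\mathbf{u})=\varphi(\mathbf{v})$ for all maps $\varphi:\mathcal{X}\to S$ (extended to monoid homomorphisms). $\mathbf{u}\approx\mathbf{v}$ is derived from a set $\Sigma$ if there is a sequence $\mathbf{u}=\mathbf{u}_1,\dots,\mathbf{u}_m=\mathbf{v}$ with $\mathbf{u}_i=\mathbf{a}\varphi(\mathbf{p})\mathbf{b}$, $\mathbf{u}_{i+1}=\mathbf{a}\varphi(\mathbf{q})\mathbf{b}$ for some words $\mathbf{a},\mathbf{b}\in\mathcal{X}^*$, a monoid endomorphism $\varphi$ of $\mathcal{X}^*$ (letters may go to the empty word), and $\mathbf{p}\approx\mathbf{q}\in\Sigma$. A finite identity basis for $S$ is a finite set $\Sigma$ of identities satisfied by $S$ from which every identity satisfied by $S$ is derived. Two monoids are equationally equivalent if they satisfy the same identities. *)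

(* Defs.v *)
From mathcomp Require Import all_boot.
Set Implicit Arguments. Unset Strict Implicit. Unset Printing Implicit Defensive.

(** Ranks: [Some n] is rank n, [None] is rank infinity. *)
Definition rank := option nat.
Definition rank_ge2 (n : rank) : Prop :=
  match n with Some m => 2 <= m | None => True end.

Definition in_alph (n : rank) (a : nat) : bool :=
  (0 < a) && (match n with Some m => a <= m | None => true end).

Inductive tree := Leaf | Node of tree & nat & tree.

Fixpoint insertR (a : nat) (t : tree) : tree :=
  match t with
  | Leaf => Node Leaf a Leaf
  | Node l x r => if x < a then Node l x (insertR a r) else Node (insertR a l) x r
  end.

Fixpoint insertL (a : nat) (t : tree) : tree :=
  match t with
  | Leaf => Node Leaf a Leaf
  | Node l x r => if a < x then Node (insertL a l) x r else Node l x (insertL a r)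
  end.

(** P_sylv(w_1...w_k): insert w_k, ..., w_1 in this order. *)
Definition Psylv (w : seq nat) : tree := foldr insertR Leaf w.
(** P^sharp(w_1...w_k): insert w_1, ..., w_k in this order. *)
Definition Psharp (w : seq nat) : tree := foldl (fun t a => insertL a t) Leaf w.
Definition Pbaxt (w : seq nat) : tree * tree := (Psharp w, Psylv w).

(** Baxter congruence. baxt_n = A_n^* / baxt_equiv. *)
Definition baxt_equiv (u v : seq nat) : Prop := Pbaxt u = Pbaxt v.

(** Words over the variable alphabet X (= nat) and substitutions
    (monoid morphisms X^* -> Y^* determined by images of letters). *)
Definition subst (phi : nat -> seq nat) (u : seq nat) : seq nat :=
  flatten (map phi u).

Definition identity := (seq nat * seq nat)%type.

(** baxt_n satisfies u ~ v: every map X -> baxt_n is given by choosing a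
    representative word over A_n for each variable; the image of a word is
    the class of the concatenation. *)
Definition baxt_satisfies (n : rank) (id : identity) : Prop :=
  forall sigma : nat -> seq nat,
    (forall i, all (in_alph n) (sigma i)) ->
    baxt_equiv (subst sigma id.1) (subst sigma id.2).

Definition deriv_step (Sigma : seq identity) (u w : seq nat) : Prop :=
  exists (a b : seq nat) (phi : nat -> seq nat) (p q : seq nat),
    ((p, q) \in Sigma \/ (q, p) \in Sigma) /\
    u = a ++ subst phi p ++ b /\ w = a ++ subst phi q ++ b.

Inductive derivable (Sigma : seq identity) : seq nat -> seq nat -> Prop :=
  | der_refl u : derivable Sigma u u
  | der_step u w v : deriv_step Sigma u w -> derivable Sigma w v -> derivable Sigma u v.

Definition baxt_identity_basis (n : rank) (Sigma : seq identity) : Prop :=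
  (forall id, id \in Sigma -> baxt_satisfies n id) /\
  (forall id : identity, baxt_satisfies n id -> derivable Sigma id.1 id.2).

Definition vx := 0. Definition vy := 1. Definition vs := 2.
Definition vt := 3. Definition vh := 4. Definition vk := 5.

Definition baxt_basis : seq identity :=
  [:: ([:: vy; vs; vx; vt; vx; vy; vh; vx; vk; vy],
       [:: vy; vs; vx; vt; vy; vx; vh; vx; vk; vy]);
      ([:: vx; vs; vy; vt; vx; vy; vh; vx; vk; vy],
       [:: vx; vs; vy; vt; vy; vx; vh; vx; vk; vy])].

(* Main.v *)
Require Import Defs.
From mathcomp Require Import all_boot zify.
From Stdlib Require Import Classical.
Set Implicit Arguments. Unset Strict Implicit. Unset Printing Implicit Defensive.

Definition cmp (s : bool) (x a : nat) : bool := if s then x < a else x <= a.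
Lemma T1 s x z a : ~~ cmp s x z -> cmp s x a -> cmp s z a.
Proof. case: s => /=; lia. Qed.
Lemma T2 s x z a : cmp s x z -> ~~ cmp s x a -> ~~ cmp s z a.
Proof. case: s => /=; lia. Qed.
Lemma cmp_le s x a : cmp s x a -> x <= a.
Proof. case: s => /=; lia. Qed.
Lemma cmpN_le s x a : ~~ cmp s x a -> a <= x.
Proof. case: s => /=; lia. Qed.

Fixpoint insG s a t := match t with
 | Leaf => Node Leaf a Leaf
 | Node l x r => if cmp s x a then Node l x (insG s a r) else Node (insG s a l) x r end.

Definition PG s w := foldr (insG s) Leaf w.

Lemma insertR_G a t : insertR a t = insG true a t.
Proof. by elim: t => //= l IHl x r IHr; rewrite IHl IHr. Qed.
Lemma insertL_G a t : insertL a t = insG false a t.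
Proof. elim: t => //= l IHl x r IHr; rewrite IHl IHr /cmp; by case: ltnP. Qed.
Lemma Psylv_G w : Psylv w = PG true w.
Proof. by elim: w => //= a w ->; rewrite insertR_G. Qed.
Lemma Psharp_G w : Psharp w = PG false (rev w).
Proof.
rewrite /Psharp /PG -[w in LHS]revK foldl_rev.
by elim: (rev w) => //= a w' ->; rewrite insertL_G.
Qed.

Fixpoint labels t := match t with Leaf => [::] | Node l x r => labels l ++ x :: labels r end.
Fixpoint bst s t := match t with Leaf => true
 | Node l x r => all (fun z => ~~ cmp s x z) (labels l) && all (cmp s x) (labels r) && bst s l && bst s r end.
Fixpoint tsize t := match t with Leaf => 0 | Node l _ r => (tsize l + tsize r).+1 end.

Lemma labels_ins s a t z : (z \in labels (insG s a t)) = (z == a) || (z \in labels t).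
Proof.
elim: t => [|l IHl x r IHr] /=; first by rewrite !inE orbF.
case: ifP => _ /=; rewrite !mem_cat !inE ?IHl ?IHr; by case: (z == a); case: (z \in labels l); case: (z == x).
Qed.

Lemma bst_ins s a t : bst s t -> bst s (insG s a t).
Proof.
elim: t => [|l IHl x r IHr] //= /andP[/andP[/andP[Hl Hr] bl] br].
case: ifP => H /=.
- have HA : all (cmp s x) (labels (insG s a r)).
    apply/allP => z; rewrite labels_ins => /orP[/eqP->//|]. by move/(allP Hr).
  by apply/andP; split; [apply/andP; split; [apply/andP; split|]|]; auto.
- have HA : all (fun z => ~~ cmp s x z) (labels (insG s a l)).
    apply/allP => z; rewrite labels_ins => /orP[/eqP->|]; first by rewrite H.
    by move/(allP Hl).
  by apply/andP; split; [apply/andP; split; [apply/andP; split|]|]; auto.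
Qed.

Lemma tsize_ins s a t : tsize (insG s a t) = (tsize t).+1.
Proof. elim: t => //= l IHl x r IHr; case: ifP => _ /=; rewrite ?IHl ?IHr; lia. Qed.

Lemma fold_bst s t w : bst s t -> bst s (foldr (insG s) t w).
Proof. by move=> H; elim: w => //= a w IH; apply: bst_ins. Qed.
Lemma fold_labels s t w z : (z \in labels (foldr (insG s) t w)) = (z \in w) || (z \in labels t).
Proof. elim: w => //= a w IH; by rewrite labels_ins IH inE orbA. Qed.
Lemma PG_bst s w : bst s (PG s w).
Proof. exact: fold_bst. Qed.
Lemma PG_labels s w z : (z \in labels (PG s w)) = (z \in w).
Proof. by rewrite fold_labels orbF. Qed.
Lemma PG_size s w : tsize (PG s w) = size w.
Proof. by elim: w => //= a w IH; rewrite tsize_ins IH. Qed.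

Lemma ins_comm_sep s a b t : bst s t -> has (fun z => cmp s z a != cmp s z b) (labels t) ->
  insG s a (insG s b t) = insG s b (insG s a t).
Proof.
elim: t => [|l IHl x r IHr] //= /andP[/andP[/andP[Hl Hr] bl] br].
rewrite has_cat /=.
case Ea: (cmp s x a); case Eb: (cmp s x b) => /= Hh; rewrite ?Ea ?Eb //.
- rewrite IHr //. case/orP: Hh => // /hasP[z zl].
  have Hz := allP Hl z zl. by rewrite (T1 Hz Ea) (T1 Hz Eb).
- rewrite IHl //. case/orP: Hh => // /hasP[z zr].
  have Hz := allP Hr z zr. by rewrite (negbTE (T2 Hz (negbT Ea))) (negbTE (T2 Hz (negbT Eb))).
Qed.

Lemma ins_comm s a b t : bst s t -> a \in labels t -> b \in labels t ->
  insG s a (insG s b t) = insG s b (insG s a t).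
Proof.
move=> bt ha hb; case: (eqVneq a b) => [->//|nab].
apply: ins_comm_sep => //; apply/hasP.
clear bt; case: s; rewrite /cmp.
- case: (ltngtP a b) => H; [exists a | exists b | by rewrite H eqxx in nab]; rewrite ?ltnn ?H //.
- case: (ltngtP a b) => H; [exists b | exists a | by rewrite H eqxx in nab]; rewrite ?leqnn //; lia.
Qed.

Lemma ins_fold_comm s a t Y : bst s t -> a \in labels t -> {subset Y <= labels t} ->
  insG s a (foldr (insG s) t Y) = foldr (insG s) (insG s a t) Y.
Proof.
move=> bt ha; elim: Y => //= y Y IH HY.
rewrite -IH; last by move=> z zY; apply: HY; rewrite inE zY orbT.
apply: ins_comm; first exact: fold_bst.
- by rewrite fold_labels ha orbT.
- by rewrite fold_labels HY ?orbT // inE eqxx.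
Qed.

Lemma fold_swap s t X Y : bst s t -> {subset X <= labels t} -> {subset Y <= labels t} ->
  foldr (insG s) t (X ++ Y) = foldr (insG s) t (Y ++ X).
Proof.
move=> bt; elim: X => [|a X IH] HX HY /=; first by rewrite cats0.
rewrite IH; last by []; last by move=> z zX; apply: HX; rewrite inE zX orbT.
rewrite !foldr_cat /= ins_fold_comm //.
- exact: fold_bst.
- by rewrite fold_labels HX ?orbT // inE eqxx.
- by move=> z zY; rewrite fold_labels HY ?orbT.
Qed.

Lemma PG_swap s X Y B : {subset X <= B} -> {subset Y <= B} ->
  PG s (X ++ Y ++ B) = PG s (Y ++ X ++ B).
Proof.
move=> HX HY; rewrite !catA.
have E Z : PG s (Z ++ B) = foldr (insG s) (PG s B) Z by rewrite /PG foldr_cat.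
rewrite !E.
apply: fold_swap; first exact: PG_bst.
- by move=> z /HX; rewrite PG_labels.
- by move=> z /HY; rewrite PG_labels.
Qed.

Lemma fold_node s l x r W : foldr (insG s) (Node l x r) W =
  Node (foldr (insG s) l (filter (fun a => ~~ cmp s x a) W)) x (foldr (insG s) r (filter (cmp s x) W)).
Proof. elim: W => //= a W ->; case E: (cmp s x a) => /=; by rewrite E. Qed.

Lemma PG_cat s A Z : PG s (A ++ Z) = foldr (insG s) (PG s Z) A.
Proof. by rewrite /PG foldr_cat. Qed.

Lemma PG_rcons s W x : PG s (rcons W x) =
  Node (PG s (filter (fun a => ~~ cmp s x a) W)) x (PG s (filter (cmp s x) W)).
Proof. by rewrite -cats1 PG_cat /= fold_node. Qed.

Definition convex (P : pred nat) := forall a b z, a <= b -> b <= z -> P a -> P z -> P b.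
Lemma convexI P Q : convex P -> convex Q -> convex (predI P Q).
Proof. move=> cP cQ a b z H1 H2 /= /andP[Pa Qa] /andP[Pz Qz]; apply/andP; split; [exact: (cP a b z)|exact: (cQ a b z)]. Qed.
Lemma convex_cmp s x : convex (cmp s x).
Proof. move=> a b z; case: s => /=; lia. Qed.
Lemma convex_ncmp s x : convex (fun a => ~~ cmp s x a).
Proof. move=> a b z; case: s => /=; lia. Qed.
Lemma convexT : convex predT.
Proof. by []. Qed.

Lemma PG_nil s W : PG s W = Leaf -> W = [::].
Proof. move=> E; apply/size0nil; by rewrite -(PG_size s) E. Qed.

Lemma filter_comm (p q : pred nat) (w : seq nat) : filter p (filter q w) = filter q (filter p w).
Proof. rewrite -!filter_predI; apply: eq_filter => a /=; by rewrite andbC. Qed.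

Lemma restrict s N W W' : size W <= N -> PG s W = PG s W' ->
  forall P, convex P -> PG s (filter P W) = PG s (filter P W').
Proof.
elim: N W W' => [|N IH] W W'.
  case: W => // _ E P _; by rewrite (PG_nil (esym E)).
case/lastP: W => [|W x]; first by move=> _ E P _; rewrite (PG_nil (esym E)).
case/lastP: W' => [|W' x']; first by move=> _ E; have := PG_nil E; case: (W).
rewrite size_rcons ltnS !PG_rcons => Hs [E1 Ex E2] P cP; subst x'.
have Hs1 : size (filter (fun a => ~~ cmp s x a) W) <= N by rewrite size_filter; apply: leq_trans (count_size _ _) Hs.
have Hs2 : size (filter (cmp s x) W) <= N by rewrite size_filter; apply: leq_trans (count_size _ _) Hs.
rewrite !filter_rcons; case Px: (P x).
- rewrite !PG_rcons; congr Node.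
  + rewrite (filter_comm _ P W) (filter_comm _ P W'); exact: IH.
  + rewrite (filter_comm _ P W) (filter_comm _ P W'); exact: IH.
- case: (classic (exists a, P a && cmp s x a)) => [[a /andP[Pa Ha]]|Hn].
  + have HP : forall b, P b -> cmp s x b.
      move=> b Pb; apply/negPn/negP => Hb.
      have := cP b x a (cmpN_le Hb) (cmp_le Ha) Pb Pa; by rewrite Px.
    have Ef : forall w, filter P w = filter P (filter (cmp s x) w).
      move=> w; rewrite -filter_predI; apply: eq_filter => b /=.
      by case Pb: (P b); rewrite //= HP.
    by rewrite !(Ef W) (Ef W'); apply: IH.
  + have HP : forall b, P b -> ~~ cmp s x b.
      move=> b Pb; apply/negP => Hb; apply: Hn; exists b; by rewrite Pb.
    have Ef : forall w, filter P w = filter P (filter (fun a => ~~ cmp s x a) w).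
      move=> w; rewrite -filter_predI; apply: eq_filter => b /=.
      by case Pb: (P b); rewrite //= HP.
    by rewrite !(Ef W) (Ef W'); apply: IH.
Qed.

Lemma fold_restrict s t W W' : (forall P, convex P -> PG s (filter P W) = PG s (filter P W')) ->
  foldr (insG s) t W = foldr (insG s) t W'.
Proof.
elim: t W W' => [|l IHl x r IHr] W W' H.
  by have := H predT convexT; rewrite !filter_predT.
rewrite !fold_node; congr Node; [apply: IHl | apply: IHr] => P cP; rewrite -!filter_predI;
  apply: H; apply: convexI => //; [exact: convex_ncmp | exact: convex_cmp].
Qed.

Lemma PG_rcong s W W' B : PG s W = PG s W' -> PG s (W ++ B) = PG s (W' ++ B).
Proof. move=> E; rewrite !PG_cat; apply: fold_restrict => P cP; exact: (restrict (leqnn _) E cP). Qed.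

Lemma Pbaxt_cong A X Y B : Pbaxt X = Pbaxt Y -> Pbaxt (A ++ X ++ B) = Pbaxt (A ++ Y ++ B).
Proof.
rewrite /Pbaxt !Psylv_G !Psharp_G => [[E1 E2]]; congr pair.
- by rewrite !rev_cat -!catA !(PG_cat false (rev B)) (PG_rcong (rev A) E1).
- by rewrite !(PG_cat true A) (PG_rcong B E2).
Qed.

Lemma Pbaxt_swap Pre X Y Suf : {subset X <= Pre} -> {subset Y <= Pre} ->
  {subset X <= Suf} -> {subset Y <= Suf} ->
  Pbaxt (Pre ++ X ++ Y ++ Suf) = Pbaxt (Pre ++ Y ++ X ++ Suf).
Proof.
move=> HX1 HY1 HX2 HY2; rewrite /Pbaxt !Psylv_G !Psharp_G; congr pair.
- rewrite !rev_cat -!catA !(PG_cat false (rev Suf)); congr foldr.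
  apply: PG_swap => z; rewrite !mem_rev; [exact: HY1|exact: HX1].
- rewrite !(PG_cat true Pre); congr foldr; exact: PG_swap.
Qed.

Lemma subst_cat (sg : nat -> seq nat) u v : subst sg (u ++ v) = subst sg u ++ subst sg v.
Proof. by rewrite /subst map_cat flatten_cat. Qed.
Lemma subst_cons (sg : nat -> seq nat) a u : subst sg (a :: u) = sg a ++ subst sg u.
Proof. by []. Qed.
Lemma subst_comp (sg phi : nat -> seq nat) p : subst sg (subst phi p) = subst (fun i => subst sg (phi i)) p.
Proof. elim: p => //= a p IH; by rewrite !subst_cons subst_cat IH. Qed.
Lemma subst_mem (sg : nat -> seq nat) p i : i \in p -> {subset sg i <= subst sg p}.
Proof.
elim: p => //= a p IH; rewrite inE subst_cons => /orP[/eqP->|/IH H] z Hz; rewrite mem_cat ?Hz //.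
by rewrite H ?orbT.
Qed.

Definition id1 := nth ([::],[::]) baxt_basis 0.
Definition id2 := nth ([::],[::]) baxt_basis 1.

Lemma valid1 t : Pbaxt (subst t id1.1) = Pbaxt (subst t id1.2).
Proof.
have -> : subst t id1.1 = (t vy ++ t vs ++ t vx ++ t vt) ++ t vx ++ t vy ++ (t vh ++ t vx ++ t vk ++ t vy).
  by rewrite /subst /= -!catA cats0.
have -> : subst t id1.2 = (t vy ++ t vs ++ t vx ++ t vt) ++ t vy ++ t vx ++ (t vh ++ t vx ++ t vk ++ t vy).
  by rewrite /subst /= -!catA cats0.
apply: Pbaxt_swap => z Hz; rewrite !mem_cat Hz ?orbT //.
Qed.

Lemma valid2 t : Pbaxt (subst t id2.1) = Pbaxt (subst t id2.2).
Proof.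
have -> : subst t id2.1 = (t vx ++ t vs ++ t vy ++ t vt) ++ t vx ++ t vy ++ (t vh ++ t vx ++ t vk ++ t vy).
  by rewrite /subst /= -!catA cats0.
have -> : subst t id2.2 = (t vx ++ t vs ++ t vy ++ t vt) ++ t vy ++ t vx ++ (t vh ++ t vx ++ t vk ++ t vy).
  by rewrite /subst /= -!catA cats0.
apply: Pbaxt_swap => z Hz; rewrite !mem_cat Hz ?orbT //.
Qed.

Lemma basis_eq : baxt_basis = [:: id1; id2].
Proof. by []. Qed.

Lemma basis_valid p q t : (p, q) \in baxt_basis -> Pbaxt (subst t p) = Pbaxt (subst t q).
Proof.
rewrite basis_eq !inE => /orP[/eqP E|/eqP E].
- have := valid1 t; by rewrite -E.
- have := valid2 t; by rewrite -E.
Qed.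

Lemma step_sound Sg u w : (forall p q, (p, q) \in Sg -> forall t, Pbaxt (subst t p) = Pbaxt (subst t q)) ->
  deriv_step Sg u w -> forall t, Pbaxt (subst t u) = Pbaxt (subst t w).
Proof.
move=> HS [a [b [phi [p [q [Hpq [-> ->]]]]]]] t.
rewrite !subst_cat !subst_comp; apply: Pbaxt_cong.
case: Hpq => H; [exact: HS | symmetry; exact: HS].
Qed.

Lemma sound u v : derivable baxt_basis u v -> forall t, Pbaxt (subst t u) = Pbaxt (subst t v).
Proof.
elim=> // u0 w v0 Hs _ IH t; rewrite -IH; apply: (step_sound _ Hs t).
move=> p q H t'; exact: basis_valid.
Qed.

Definition Inv2 W W' := baxt_satisfies (Some 2) (W, W').
Lemma Inv2_trans a b c : Inv2 a b -> Inv2 b c -> Inv2 a c.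
Proof. move=> H1 H2 s Hs; rewrite /baxt_equiv (H1 s Hs); exact: H2. Qed.
Lemma Inv2_sym a b : Inv2 a b -> Inv2 b a.
Proof. move=> H1 s Hs; rewrite /baxt_equiv (H1 s Hs). by []. Qed.

Notation D := (derivable baxt_basis).
Lemma sound_Inv2 u v : D u v -> Inv2 u v.
Proof. move=> H s _; exact: sound. Qed.
Lemma D_trans u v w : D u v -> D v w -> D u w.
Proof. elim=> // u0 w0 v0 Hs _ IH H; apply: der_step Hs (IH H). Qed.

Definition pre (e : nat) (w : seq nat) := take (index e w) w.
Lemma pre_cons e a w : pre e (a :: w) = if a == e then [::] else a :: pre e w.
Proof. rewrite /pre /=; by case: (a == e). Qed.
Lemma pre_notin e w : e \notin pre e w.
Proof. elim: w => //= a w IH; rewrite pre_cons; case: eqP => // /eqP H; by rewrite inE negb_or eq_sym H. Qed.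
Lemma pre_cat_notin e w u : e \notin w -> pre e (w ++ u) = w ++ pre e u.
Proof. elim: w => //= a w IH; rewrite inE negb_or => /andP[H1 H2]; by rewrite pre_cons eq_sym (negbTE H1) IH. Qed.
Lemma pre_cat_in e w u : e \in w -> pre e (w ++ u) = pre e w.
Proof.
elim: w => //= a w IH; rewrite inE !pre_cons eq_sym; case: eqP => //= _ H; by rewrite IH.
Qed.
Lemma pre_split e u : e \in u -> exists r, u = pre e u ++ e :: r.
Proof.
elim: u => //= a u IH; rewrite inE pre_cons eq_sym; case: eqP => [->|_ /= H]; first by exists u.
by case: (IH H) => r Er; exists r; rewrite {1}Er.
Qed.
Lemma count_pre_le x e W : count_mem x (pre e W) <= count_mem x W.
Proof. by rewrite -{2}(cat_take_drop (index e W) W) count_cat leq_addr. Qed.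
Lemma count0_nil (s : seq nat) : (forall x, count_mem x s = 0) -> s = [::].
Proof. case: s => // a s H; have := H a; by rewrite /= eqxx. Qed.

Fixpoint g1 t := match t with Leaf => 0 | Node l x r => if x == 1 then (g1 r).+1 else 0 end.
Fixpoint f2 t := match t with Leaf => 0 | Node l x r => if x == 2 then (f2 l).+1 else 0 end.
Fixpoint lead k (w : seq nat) := match w with a :: w' => if a == k then (lead k w').+1 else 0 | [::] => 0 end.

Lemma g1_PG w : all (fun a => 0 < a) w -> g1 (PG false (rev w)) = lead 1 w.
Proof.
elim: w => //= a w IH /andP[Ha Hw]; rewrite rev_cons PG_rcons /=.
case: eqP => // Ea; subst a.
have -> : filter (cmp false 1) (rev w) = rev w by apply/all_filterP; rewrite all_rev.
by rewrite IH.
Qed.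

Lemma f2_PG w : all (fun a => a <= 2) w -> f2 (PG true w) = lead 2 (rev w).
Proof.
elim/last_ind: w => //= w x IH; rewrite all_rcons => /andP[Hx Hw]; rewrite PG_rcons rev_rcons /=.
case: eqP => // Ex; subst x.
have -> : filter (fun a => ~~ cmp true 2 a) w = w.
  apply/all_filterP; apply: sub_all Hw => a /=; lia.
by rewrite IH.
Qed.

Definition sgk (e x j k : nat) (i : nat) : seq nat := if i == e then [:: j] else if i == x then [:: k] else [::].

Lemma lead_subst (e x j k : nat) (W : seq nat) : j != k -> x != e -> lead k (subst (sgk e x j k) W) = count_mem x (pre e W).
Proof.
move=> jk xe; elim: W => //= a W IH; rewrite subst_cons pre_cons /sgk.
case: (a =P e) => [Hae|ae] /=; first by subst a; rewrite (negbTE jk).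
case: (a =P x) => [Hax|ax] /=; first by subst a; rewrite eqxx IH.
by rewrite IH.
Qed.

Lemma all_subst (P : pred nat) sg W : (forall i, all P (sg i)) -> all P (subst sg W).
Proof. move=> H; elim: W => //= a W IH; by rewrite subst_cons all_cat H IH. Qed.

Lemma rev_subst sg W : (forall i, rev (sg i) = sg i) -> rev (subst sg W) = subst sg (rev W).
Proof.
move=> H; elim: W => //= a W IH; rewrite subst_cons rev_cat IH H rev_cons -cats1 subst_cat.
by rewrite subst_cons /= cats0.
Qed.

Lemma sgk_alph (e x j k i : nat) : 0 < j <= 2 -> 0 < k <= 2 -> all (in_alph (Some 2)) (sgk e x j k i).
Proof. rewrite /sgk /in_alph /= => Hj Hk; case: ifP => _ /=; rewrite ?Hj //; case: ifP => _ //=; by rewrite Hk. Qed.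

Lemma Inv_pre (W W' : seq nat) (e x : nat) : Inv2 W W' -> count_mem x (pre e W) = count_mem x (pre e W').
Proof.
move=> HI; case: (eqVneq x e) => [->|xe].
  by rewrite !(count_memPn (pre_notin _ _)).
have := HI (sgk e x 2 1) (fun i => @sgk_alph e x 2 1 i isT isT).
rewrite /baxt_equiv /Pbaxt /= => [[E _]].
have Hp : forall i, all (fun a => 0 < a) (sgk e x 2 1 i) by move=> i; rewrite /sgk; case: ifP => _ //; case: ifP.
have := congr1 g1 E; rewrite !Psharp_G !g1_PG ?all_subst // !lead_subst //.
Qed.

Lemma Inv_suf (W W' : seq nat) (e x : nat) : Inv2 W W' -> count_mem x (pre e (rev W)) = count_mem x (pre e (rev W')).
Proof.
move=> HI; case: (eqVneq x e) => [->|xe].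
  by rewrite !(count_memPn (pre_notin _ _)).
have := HI (sgk e x 1 2) (fun i => @sgk_alph e x 1 2 i isT isT).
rewrite /baxt_equiv /Pbaxt /= => [[_ E]].
have Hp : forall i, all (fun a => a <= 2) (sgk e x 1 2 i) by move=> i; rewrite /sgk; case: ifP => _ //; case: ifP.
have Hr : forall i, rev (sgk e x 1 2 i) = sgk e x 1 2 i by move=> i; rewrite /sgk; case: ifP => _ //; case: ifP.
have := congr1 f2 E; rewrite !Psylv_G !f2_PG ?all_subst // !rev_subst // !lead_subst //.
Qed.

Lemma Inv_count (W W' : seq nat) (x : nat) : Inv2 W W' -> count_mem x W = count_mem x W'.
Proof.
move=> HI.
have : Pbaxt (subst (fun i => if i == x then [:: 1] else [::]) W) = Pbaxt (subst (fun i => if i == x then [:: 1] else [::]) W').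
  apply: HI => i; by case: ifP.
rewrite /Pbaxt => [[_ E]].
have Hc : forall V, size (subst (fun i => if i == x then [:: 1] else [::]) V) = count_mem x V.
  elim=> //= a V IH; rewrite subst_cons size_cat IH; by case: (a == x).
have := congr1 tsize E; by rewrite !Psylv_G !PG_size !Hc.
Qed.

Lemma Inv_size W W' : Inv2 W W' -> size W = size W'.
Proof.
move=> HI.
have : Pbaxt (subst (fun i => [:: 1]) W) = Pbaxt (subst (fun i => [:: 1]) W') by apply: HI.
rewrite /Pbaxt => [[_ E]].
have Hc : forall V, size (subst (fun i => [:: 1]) V) = size V.
  by elim=> // a V IH; rewrite subst_cons size_cat IH.
have := congr1 tsize E; by rewrite !Psylv_G !PG_size !Hc.
Qed.

Lemma split2 (c d : nat) (P : seq nat) : c != d -> c \in P -> d \in P ->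
  (exists P1 P2 P3, P = P1 ++ c :: P2 ++ d :: P3) \/ (exists P1 P2 P3, P = P1 ++ d :: P2 ++ c :: P3).
Proof.
move=> cd; elim: P => // a P IH; rewrite !inE.
case: (a =P c) => [Hac|ac] /=.
  subst a; rewrite eq_sym (negbTE cd) /= => _ dP; left.
  case: (pre_split dP) => r Er; exists [::], (pre d P), r; by rewrite {1}Er.
case: (a =P d) => [Had|ad] /=.
  subst a; rewrite (negbTE cd) /= => cP _; right.
  case: (pre_split cP) => r Er; exists [::], (pre c P), r; by rewrite {1}Er.
move=> /orP[/eqP E|cP]; first by rewrite E in ac.
move=> /orP[/eqP E|dP]; first by rewrite E in ad.
case: (IH cP dP) => [[P1 [P2 [P3 E]]]|[P1 [P2 [P3 E]]]]; [left|right];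
  exists (a :: P1), P2, P3; by rewrite E.
Qed.

Ltac ncat := repeat (rewrite -!catA /=).
Definition mkphi (x y : nat) (s t h k : seq nat) (i : nat) : seq nat :=
  match i with 0 => [:: x] | 1 => [:: y] | 2 => s | 3 => t | 4 => h | _ => k end.

Lemma swap_step (P S : seq nat) (c d : nat) : c != d -> c \in P -> d \in P -> c \in S -> d \in S ->
  deriv_step baxt_basis (P ++ c :: d :: S) (P ++ d :: c :: S).
Proof.
move=> cd cP dP cS dS.
have i1 : id1 \in baxt_basis by rewrite basis_eq inE eqxx.
have i2 : id2 \in baxt_basis by rewrite basis_eq !inE eqxx orbT.
case: (split2 cd cP dP) => [[P1 [P2 [P3 ->]]]|[P1 [P2 [P3 ->]]]];
case: (split2 cd cS dS) => [[S1 [S2 [S3 ->]]]|[S1 [S2 [S3 ->]]]].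
- exists P1, S3, (mkphi c d P2 P3 S1 S2), id2.1, id2.2; split; first by left.
  by split; rewrite /subst /=; repeat (rewrite -!catA /=).
- exists P1, S3, (mkphi d c P2 P3 S1 S2), id1.2, id1.1; split; first by right.
  by split; rewrite /subst /=; repeat (rewrite -!catA /=).
- exists P1, S3, (mkphi c d P2 P3 S1 S2), id1.1, id1.2; split; first by left.
  by split; rewrite /subst /=; repeat (rewrite -!catA /=).
- exists P1, S3, (mkphi d c P2 P3 S1 S2), id2.2, id2.1; split; first by right.
  by split; rewrite /subst /=; repeat (rewrite -!catA /=).
Qed.

Ltac nlia := change (Equality.sort Datatypes_nat__canonical__eqtype_Equality) with nat in *; lia.

Lemma count_in (x : nat) (s : seq nat) : (x \in s) = (0 < @count nat (pred1 x) s).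
Proof. by rewrite -has_pred1 has_count. Qed.

Lemma bubble (w v1 : seq nat) (d : nat) : d \in w -> d \in v1 -> forall k (p r : seq nat),
  size p = k -> d \notin p -> Inv2 (w ++ p ++ d :: r) (w ++ d :: v1) ->
  exists u2, D (w ++ p ++ d :: r) (w ++ d :: u2).
Proof.
move=> dw dv; elim=> [|k IH] p r Hs dp HI.
  rewrite (size0nil Hs); exists r; exact: der_refl.
case/lastP: p Hs dp HI => [//|p e]; rewrite size_rcons => [[Hs]] dp HI.
move: dp; rewrite mem_rcons inE negb_or => /andP[de dp].
have Hc : forall x : nat, count_mem x (rcons p e ++ d :: r) = count_mem x (d :: v1).
  move=> x; have := Inv_count x HI; rewrite !count_cat; nlia.
have dp0 : count_mem d p = 0 by apply/count_memPn.
have ed : (e == d) = false by apply/negbTE; rewrite eq_sym.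
have Hd := Hc d; rewrite -cats1 -catA count_cat /= eqxx ed /= in Hd.
have dv1 : 0 < count_mem d v1 by rewrite -count_in.
have dr : d \in r by rewrite count_in; nlia.
have ewp : e \in w ++ p.
  apply/negPn/negP; rewrite mem_cat negb_or => /andP[ew ep].
  have := Inv_pre e d HI.
  rewrite -cats1 -catA pre_cat_notin // pre_cat_notin //= pre_cons eqxx.
  rewrite pre_cat_notin // pre_cons eq_sym ed !count_cat /= eqxx; nlia.
have er : e \in r.
  apply/negPn/negP => er.
  have ev : e \in v1.
    have := Hc e; rewrite -cats1 -catA !count_cat /= eqxx eq_sym ed /= => He.
    rewrite count_in; nlia.
  have := Inv_suf e d HI.
  have -> : rev (w ++ rcons p e ++ d :: r) = rev r ++ d :: e :: (rev p ++ rev w).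
    by rewrite -cats1 !rev_cat /= !rev_cons -!cats1; ncat.
  have -> : rev (w ++ d :: v1) = rev v1 ++ d :: rev w.
    by rewrite rev_cat rev_cons -cats1 -catA.
  rewrite pre_cat_notin ?mem_rev // pre_cons (negbTE de) pre_cons eqxx pre_cat_in ?mem_rev //.
  have := count_pre_le d e (rev v1); rewrite count_cat count_rev /= eqxx count_rev; nlia.
have Hstep : D (w ++ rcons p e ++ d :: r) (w ++ p ++ d :: e :: r).
  apply: der_step (der_refl _ _).
  have -> : w ++ rcons p e ++ d :: r = (w ++ p) ++ e :: d :: r by rewrite cat_rcons catA.
  have -> : w ++ p ++ d :: e :: r = (w ++ p) ++ d :: e :: r by rewrite catA.
  apply: swap_step => //; first by rewrite ed.
  by rewrite mem_cat dw.
have HI' : Inv2 (w ++ p ++ d :: e :: r) (w ++ d :: v1).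
  apply: Inv2_trans HI; apply: Inv2_sym; exact: sound_Inv2.
case: (IH p (e :: r) Hs dp HI') => u2 Hu2.
exists u2; exact: D_trans Hstep Hu2.
Qed.

Lemma front (w u : seq nat) (d : nat) (v1 : seq nat) : Inv2 (w ++ u) (w ++ d :: v1) ->
  exists u2, D (w ++ u) (w ++ d :: u2).
Proof.
move=> HI.
have Hc : forall x : nat, count_mem x u = count_mem x (d :: v1).
  move=> x; have := Inv_count x HI; rewrite !count_cat; nlia.
have du : d \in u by rewrite count_in Hc /= eqxx; nlia.
case: (pre_split du) => r Er.
have dp : d \notin pre d u := pre_notin d u.
move: HI Hc; rewrite Er; set p := pre d u => HI Hc.
case dw: (d \in w).
- case dv: (d \in v1).
  + exact: (bubble dw dv (erefl (size p)) dp HI).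
  + have dr : d \notin r.
      have := Hc d; rewrite count_cat /= eqxx (count_memPn dp) (count_memPn (negbT dv)).
      move=> H; apply/count_memPn; nlia.
    have Hr : forall x : nat, count_mem x r = count_mem x v1.
      move=> x; have := Inv_suf d x HI.
      rewrite !rev_cat !rev_cons -!cats1 -!catA /=.
      rewrite pre_cat_notin ?mem_rev // pre_cons eqxx pre_cat_notin ?mem_rev ?dv // pre_cons eqxx.
      by rewrite !cats0 !count_rev.
    have p0 : p = [::].
      apply: count0_nil => x; have := Hc x; rewrite count_cat /= Hr; nlia.
    rewrite p0; exists r; exact: der_refl.
- have := fun x => Inv_pre d x HI.
  rewrite !pre_cat_notin ?dw // !pre_cons !eqxx => H.
  have p0 : p = [::].
    apply: count0_nil => x; have := H x; rewrite !count_cat; nlia.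
  rewrite p0; exists r; exact: der_refl.
Qed.

Lemma complete N : forall (w u v : seq nat), size u <= N -> Inv2 (w ++ u) (w ++ v) -> D (w ++ u) (w ++ v).
Proof.
elim: N => [|N IH] w u v Hs HI; have Hsz := Inv_size HI; rewrite !size_cat in Hsz.
- have u0 : u = [::] by apply: size0nil; nlia.
  have v0 : v = [::] by apply: size0nil; nlia.
  rewrite u0 v0; exact: der_refl.
- case: v HI Hsz => [|d v1] HI /= Hsz.
    have u0 : u = [::] by apply: size0nil; nlia.
    rewrite u0; exact: der_refl.
  case: (front HI) => u2 Hu2.
  have HI2 : Inv2 (w ++ d :: u2) (w ++ d :: v1).
    apply: Inv2_trans HI; apply: Inv2_sym; exact: sound_Inv2.
  have Hs2 := Inv_size (sound_Inv2 Hu2); rewrite !size_cat /= in Hs2.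
  apply: D_trans Hu2 _.
  rewrite -!cat_rcons; apply: IH; first by nlia.
  by rewrite !cat_rcons.
Qed.

Lemma sat_Inv2 n (id : identity) : rank_ge2 n -> baxt_satisfies n id -> Inv2 id.1 id.2.
Proof.
case: id => u v Hn H s Hs; apply: H => i; apply: sub_all (Hs i) => a; rewrite /in_alph.
case: n Hn => [m|] //= Hm /andP[-> H2] /=; nlia.
Qed.

Lemma der_sat n u v : derivable baxt_basis u v -> baxt_satisfies n (u, v).
Proof. move=> H s _; exact: sound. Qed.

Theorem theorem4p10 :
  (forall n : rank, rank_ge2 n -> baxt_identity_basis n baxt_basis) /\
  (forall n m : rank, rank_ge2 n -> rank_ge2 m ->
     forall id : identity, baxt_satisfies n id <-> baxt_satisfies m id).
Proof.
have C : forall n (id : identity), rank_ge2 n -> baxt_satisfies n id -> derivable baxt_basis id.1 id.2.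
  move=> n [u v] Hn H; have := sat_Inv2 Hn H => /= HI.
  exact: (complete (leqnn (size u)) (w := [::]) HI).
split.
- move=> n Hn; split; last by move=> id H; exact: C H.
  move=> [p q] H s _; rewrite /baxt_equiv /=; exact: (basis_valid s H).
- move=> n m Hn Hm [u v]; split => H.
  + exact: der_sat (C _ _ Hn H).
  + exact: der_sat (C _ _ Hm H).
Qed.
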